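(* Let $n\ge1$, $x>0$ and $0<v\le nx$. Suppose $y,z\ge0$ satisfy $y+z=x$ and $\lfloor n/2\rfloor\, y+\lceil n/2\rceil\, z\le v$. Let $\boldsymbol v_{yz}\in\mathbb{R}^n$ have $i$-th coordinate $z$ if $i$ is odd and $y$ if $i$ is even, and let $\boldsymbol v_r\in\mathbb{R}^n$ have nonnegative coordinates with $\sum_i v_{r,i}=v-\lfloor n/2\rfloor y-\lceil n/2\rceil z$ and $v_{yz,i}+v_{r,i}\le x$ for all $i$. Then $\boldsymbol v^*=\boldsymbol v_{yz}+\boldsymbol v_r$ minimizes $f$ over $\Lambda(v)$, and $\min_{\boldsymbol v\in\Lambda(v)}f(\boldsymbol v)=f(\boldsymbol v^* )=nx-v$.
   Context: For $w>0$, $\Lambda(w)$ is the set of vectors in $\mathbb{R}^n$ with nonnegative coordinates summing to $w$. For $\boldsymbol v=(v_1,\dots,v_n)$, $f(\boldsymbol v)\equiv\sum_{1\le l\le k\le n}\bigl(x-\sum_{i=l}^k v_i\bigr)^+$, where $a^+=\max\{a,0\}$. (Such $y,z$ exist e.g. whenever $v\ge\lfloor n/2\rfloor x$, taking $y=x$, $z=0$.) *)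

(* Defs.v *)
From HB Require Import structures.
From mathcomp Require Import all_boot all_order all_algebra.
Set Implicit Arguments. Unset Strict Implicit. Unset Printing Implicit Defensive.
Import Order.TTheory GRing.Theory Num.Theory.
Local Open Scope ring_scope.

(* Vectors in R^n are functions 'I_n -> R; coordinate i (1-based in the
   paper) is index i-1 here. *)

Definition pos_part (R : realFieldType) (a : R) : R := Num.max a 0.

Definition Lambda (R : realFieldType) (n : nat) (w : R) : pred ('I_n -> R) :=
  fun v => [forall i, 0 <= v i] && (\sum_(i < n) v i == w).

Definition fobj (R : realFieldType) (n : nat) (x : R) (v : 'I_n -> R) : R :=
  \sum_(l < n) \sum_(k < n | (l <= k)%N)
     pos_part (x - \sum_(i < n | (l <= i <= k)%N) v i).

(* v_yz: coordinate i (1-based) is z if i odd, y if i even; in 0-based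
   index j = i-1, that is z if j is even, y if j is odd. *)
Definition v_yz (R : realFieldType) (n : nat) (y z : R) : 'I_n -> R :=
  fun j => if odd j then y else z.

Arguments Lambda {R} n w.
Arguments fobj {R n} x v.
Arguments v_yz {R n} y z.

(* Main.v *)
Require Import Defs.
From HB Require Import structures.
From mathcomp Require Import all_boot all_order all_algebra ring lra.
Import Order.TTheory GRing.Theory Num.Theory.
Local Open Scope ring_scope.

Lemma pp_ge0 (R : realFieldType) (a : R) : 0 <= pos_part a.
Proof. by rewrite /pos_part le_max lexx orbT. Qed.

Lemma pp_ge (R : realFieldType) (a : R) : a <= pos_part a.
Proof. by rewrite /pos_part le_max lexx. Qed.

Lemma pp_id (R : realFieldType) (a : R) : 0 <= a -> pos_part a = a.
Proof. by move=> h; rewrite /pos_part max_l. Qed.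

Lemma pp_0 (R : realFieldType) (a : R) : a <= 0 -> pos_part a = 0.
Proof. by move=> h; rewrite /pos_part max_r. Qed.

Lemma inner_split (R : realFieldType) (n : nat) (x : R) (w : 'I_n -> R) (l : 'I_n) :
  \sum_(k < n | (l <= k)%N) pos_part (x - \sum_(i < n | (l <= i <= k)%N) w i)
  = pos_part (x - w l) +
    \sum_(k < n | (l <= k)%N && (k != l)) pos_part (x - \sum_(i < n | (l <= i <= k)%N) w i).
Proof.
rewrite (bigD1 l) //=; congr (pos_part (x - _) + _).
rewrite (eq_bigl (fun i => i == l)) ?big_pred1_eq // => i.
by rewrite -eqn_leq eq_sym.
Qed.

Lemma sum_yz (R : realFieldType) (y z : R) (n : nat) :
  \sum_(i < n) v_yz y z i = (n./2)%:R * y + (uphalf n)%:R * z.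
Proof.
rewrite /v_yz -(big_mkord xpredT (fun i => if odd i then y else z)).
suff : forall n, \sum_(0 <= i < n) (if odd i then y else z) = (n./2)%:R * y + (uphalf n)%:R * z /\
   \sum_(0 <= i < n.+1) (if odd i then y else z) = (n.+1./2)%:R * y + (uphalf n.+1)%:R * z by case/(_ n).
elim=> [|m [IH1 IH2]].
  by rewrite big_nat_recr // !big_geq //=; split; rewrite ?mul0r ?mul1r ?add0r ?addr0.
split=> //.
rewrite big_nat_recr //= big_nat_recr //= IH1.
rewrite /= -[(m./2).+1]addn1 -[(uphalf m).+1]addn1 !natrD.
case: (odd m); rewrite /=; ring.
Qed.

Lemma nx_sum (R : realFieldType) (n : nat) (x : R) : n%:R * x = \sum_(i < n) x.
Proof. by rewrite sumr_const card_ord mulr_natl. Qed.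

Lemma fobj_split (R : realFieldType) (n : nat) (x : R) (w : 'I_n -> R) :
  fobj x w = \sum_(l < n) (pos_part (x - w l) +
    \sum_(k < n | (l <= k)%N && (k != l)) pos_part (x - \sum_(i < n | (l <= i <= k)%N) w i)).
Proof. by apply: eq_bigr => l _; rewrite inner_split. Qed.

Lemma fobj_lb (R : realFieldType) (n : nat) (x : R) (w : 'I_n -> R) :
  n%:R * x - \sum_(i < n) w i <= fobj x w.
Proof.
rewrite fobj_split nx_sum -sumrB.
apply: ler_sum => l _.
rewrite -{1}[x - w l]addr0; apply: lerD; first exact: pp_ge.
by apply: sumr_ge0 => k _; apply: pp_ge0.
Qed.

Theorem mainTheorem4 (R : realFieldType) (n : nat) (x v y z : R)
  (vr : 'I_n -> R) :
  (1 <= n)%N -> 0 < x -> 0 < v -> v <= n%:R * x ->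
  0 <= y -> 0 <= z -> y + z = x ->
  (n./2)%:R * y + (uphalf n)%:R * z <= v ->
  (forall i, 0 <= vr i) ->
  \sum_(i < n) vr i = v - (n./2)%:R * y - (uphalf n)%:R * z ->
  (forall i, v_yz y z i + vr i <= x) ->
  let vstar := fun i => v_yz y z i + vr i in
  [/\ vstar \in Lambda n v,
      (forall u : 'I_n -> R, u \in Lambda n v -> fobj x vstar <= fobj x u)
    & fobj x vstar = n%:R * x - v].
Proof.
move=> n1 x0 v0 vn y0 z0 yzx hv vr0 svr vx vstar.
have vs0 : forall i, 0 <= vstar i.
  by move=> i; rewrite /vstar addr_ge0 // /v_yz; case: odd.
have sv : \sum_(i < n) vstar i = v.
  by rewrite /vstar big_split /= sum_yz svr; ring.
have fv : fobj x vstar = n%:R * x - v.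
  rewrite fobj_split -sv nx_sum -sumrB.
  apply: eq_bigr => l _.
  rewrite pp_id ?subr_ge0; last exact: vx.
rewrite big1 ?addr0 // => k /andP [lk kl].
  apply: pp_0; rewrite subr_le0.
  have lk' : (l < k)%N by rewrite ltn_neqAle eq_sym kl.
  have l1n : (l.+1 < n)%N by apply: leq_ltn_trans lk' _.
  pose l1 := Ordinal l1n.
  rewrite (bigD1 l) /=; last by rewrite leqnn.
  rewrite (bigD1 l1) /=; last by rewrite leqnSn lk' /= -val_eqE /= neq_ltn ltnSn orbT.
  rewrite addrA -[x]addr0 lerD //; last by rewrite sumr_ge0.
  rewrite -yzx /vstar /v_yz /=.
  have := vr0 l; have := vr0 l1.
  case: (odd l) => /= h1 h2.
    lra.
  lra.
split=> //.
- by apply/andP; split; [apply/forallP|apply/eqP].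
- move=> u /andP [_ /eqP su]; rewrite fv -su; exact: fobj_lb.
Qed.
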